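(* Let $(\alpha_n)_{n\ge0}$ be complex numbers with $|\alpha_n|<1$ and let $\mu_{n,r,s}$ be as in the context. For all nonnegative integers $n,r,s$, \[ \mu_{n,r,s}=\sum_{p\in\mathrm{gMot}((-r,r)\to(2n-s,s))}\mathrm{wt}_M(p). \]
   Context: For a polynomial $f(z)=\sum_{k=0}^n a_kz^k$ of degree $n$, write $\overline{f}(z)=\sum_k\overline{a_k}z^k$ and $f^*(z)=z^n\overline{f}(1/z)$. Define monic $\Phi_n$ by $\Phi_0=1$, $\Phi_{n+1}(z)=z\Phi_n(z)-\overline{\alpha_n}\Phi_n^*(z)$. Let $\mathcal{L}$ be the unique linear functional on Laurent polynomials with $\mathcal{L}(1)=1$ and $\mathcal{L}(\Phi_m(z)\overline{\Phi_n}(1/z))=0$ for $m\neq n$; set $\langle f,g\rangle=\mathcal{L}(f(z)\overline{g}(1/z))$ and $\mu_{n,r,s}=\langle\Phi_s(z),z^n\Phi_r(z)\rangle/\langle\Phi_s,\Phi_s\rangle$. Set $\alpha_{-1}=-1$. A gentle Motzkin path is a lattice path in $\mathbb{Z}\times\mathbb{Z}_{\ge0}$ with steps $(1,1)$, $(1,0)$, $(1,-1)$ such that an up-step $(a,b)\to(a+1,b+1)$ occurs only when $a+b$ is even and a down-step $(a,b)\to(a+1,b-1)$ occurs only when $a+b$ is odd. $\mathrm{gMot}((a,b)\to(c,d))$ denotes the set of gentle Motzkin paths from $(a,b)$ to $(c,d)$. The weight $\mathrm{wt}_M(p)$ is the product of step weights: up-step weight $1$; down-step $(a,b)\to(a+1,b-1)$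 weight $1-|\alpha_{b-1}|^2$; horizontal step $(a,b)\to(a+1,b)$ weight $\alpha_b$ if $a+b$ is even and $-\overline{\alpha_{b-1}}$ if $a+b$ is odd. *)

(* Defs.v *)
From HB Require Import structures.
From mathcomp Require Import all_boot all_order all_algebra.
From mathcomp Require Import complex.
Set Implicit Arguments. Unset Strict Implicit. Unset Printing Implicit Defensive.
Import Order.TTheory GRing.Theory Num.Theory.
Local Open Scope ring_scope.

Section OPUC.
Variable R : rcfType.
Notation C := (R[i]).

(* f^*(z) = z^n \bar f(1/z), n = deg f = (size f).-1 *)
Definition pstar (f : {poly C}) : {poly C} :=
  \poly_(i < size f) ((f`_((size f).-1 - i))^*).

Fixpoint Phi (alpha : nat -> C) (n : nat) : {poly C} :=
  match n with
  | 0 => 1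
  | m.+1 => 'X * Phi alpha m - (alpha m)^* *: pstar (Phi alpha m)
  end.

(* A linear functional L on Laurent polynomials is represented by its values
   c k = L(z^k), k : int, so that L (sum_k a_k z^k) = sum_k a_k c k. *)
(* <f,g> = L(f(z) \bar g(1/z)) *)
Definition ip (c : int -> C) (f g : {poly C}) : C :=
  \sum_(i < size f) \sum_(j < size g) f`_i * (g`_j)^* * c (i%:Z - j%:Z).

Definition mu (alpha : nat -> C) (c : int -> C) (n r s : nat) : C :=
  ip c (Phi alpha s) ('X^n * Phi alpha r) / ip c (Phi alpha s) (Phi alpha s).

Definition aext (alpha : nat -> C) (k : int) : C :=
  match k with Posz m => alpha m | Negz _ => -1 end.

End OPUC.

Inductive step := Up | Flat | Down.

Definition step_to (s : step) : 'I_3 :=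
  match s with Up => inord 0 | Flat => inord 1 | Down => inord 2 end.
Definition step_of (i : 'I_3) : step :=
  match val i with 0 => Up | 1 => Flat | _ => Down end.
Lemma step_toK : cancel step_to step_of.
Proof. by case; rewrite /step_of /= inordK. Qed.

HB.instance Definition _ := Finite.copy step (can_type step_toK).

(* A path is a start point (x,y) and a sequence of steps.
   gentle x y ss: the path stays in Z x Z_{>=0}, up-steps (a,b)->(a+1,b+1)
   only when a+b is even, down-steps (a,b)->(a+1,b-1) only when a+b odd. *)
Fixpoint gentle_from (x y : int) (ss : seq step) : bool :=
  match ss with
  | [::] => true
  | Up :: ss' => ~~ odd (absz (x + y)) && gentle_from (x + 1) (y + 1) ss'
  | Flat :: ss' => gentle_from (x + 1) y ss'
  | Down :: ss' => odd (absz (x + y)) && (0 < y) && gentle_from (x + 1) (y - 1) ss'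
  end.

Definition gentle (x y : int) (ss : seq step) : bool :=
  (0 <= y) && gentle_from x y ss.

Fixpoint endpt (x y : int) (ss : seq step) : int * int :=
  match ss with
  | [::] => (x, y)
  | Up :: ss' => endpt (x + 1) (y + 1) ss'
  | Flat :: ss' => endpt (x + 1) y ss'
  | Down :: ss' => endpt (x + 1) (y - 1) ss'
  end.

Fixpoint wtM (R : rcfType) (alpha : nat -> R[i]) (x y : int) (ss : seq step)
  : R[i] :=
  match ss with
  | [::] => 1
  | Up :: ss' => wtM alpha (x + 1) (y + 1) ss'
  | Flat :: ss' =>
      (if ~~ odd (absz (x + y)) then aext alpha y else - (aext alpha (y - 1))^*)
      * wtM alpha (x + 1) y ss'
  | Down :: ss' =>
      (1 - `|aext alpha (y - 1)| ^+ 2) * wtM alpha (x + 1) (y - 1) ss'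
  end.

(* Every such path has exactly
   c - a steps, so it suffices to range over step tuples of length |c - a|
   (when c < a no tuple ends at x-coordinate c, so the sum is empty). *)
Definition gMot_sum (R : rcfType) (alpha : nat -> R[i]) (a b c d : int) : R[i] :=
  \sum_(t : (absz (c - a)).-tuple step | gentle a b t && (endpt a b t == (c, d)))
     wtM alpha a b t.

(* Main.v *)
Require Import Defs.
From HB Require Import structures.
From mathcomp Require Import all_boot all_order all_algebra.
From mathcomp Require Import complex.
From mathcomp Require Import zify ring lra.
Set Implicit Arguments. Unset Strict Implicit. Unset Printing Implicit Defensive.
Import Order.TTheory GRing.Theory Num.Theory.
Local Open Scope ring_scope.
Section Comb.
Variable R : rcfType.
Variable alpha : nat -> R[i].
Local Notation C := R[i].

Definition fo (y : nat) : C := if y is y'.+1 then - (alpha y')^* else 1.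

Fixpoint V (k l y d : nat) : C :=
  match k with
  | 0 => (y == d)%:R
  | k'.+1 => if ~~ odd l then V k' l.+2 y.+1 d + alpha y * V k' l.+1 y d
             else (if y is y'.+1 then (1 - `|alpha y'| ^+ 2) * V k' l y' d else 0)
                  + fo y * V k' l.+1 y d
  end.

Definition TS k (x y d : int) :=
  \sum_(t : k.-tuple step | gentle_from x y t && ((endpt x y t).2 == d)) wtM alpha x y t.

Lemma step_ofK : cancel step_of step_to.
Proof. by move=> i; apply/val_inj; case: i => [[|[|[|i]]] Hi] //=; rewrite inordK. Qed.

Lemma sum_step (F : step -> C) : \sum_(h : step) F h = F Up + F Flat + F Down.
Proof.
rewrite (reindex step_of); last by exists step_to => x _; [apply: step_ofK | apply: step_toK].
rewrite !big_ord_recr big_ord0 /= add0r.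
by rewrite /step_of /=.
Qed.

Lemma TS_rec k x y d : TS k.+1 x y d = \sum_(h : step)
  \sum_(t : k.-tuple step | gentle_from x y (h :: t) && ((endpt x y (h::t)).2 == d))
     wtM alpha x y (h :: t).
Proof.
rewrite /TS (reindex (fun p : step * k.-tuple step => [tuple of p.1 :: p.2])) /=; last first.
  exists (fun u : k.+1.-tuple step => (thead u, [tuple of behead u])) => [[h t] _|u _] /=.
    by rewrite theadE; congr pair; apply/val_inj.
  by rewrite [in RHS](tuple_eta u).
by rewrite -(pair_big_dep xpredT (fun (h : step) (t : k.-tuple step) => gentle_from x y (h :: t) && ((endpt x y (h::t)).2 == d))
   (fun (h : step) (t : k.-tuple step) => wtM alpha x y (h :: t))).
Qed.

Lemma TS_V k : forall (x : int) (y l d : nat), x + y%:Z = l%:Z -> TS k x y d = V k l y d.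
Proof.
elim: k => [|k IH] x y l d hxy.
  rewrite /TS big_mkcond (big_pred1 [tuple]) /=; last by move=> t; rewrite [t]tuple0 /=; apply/esym/eqP.
  by rewrite eqz_nat; case: eqP.
rewrite TS_rec sum_step /= hxy /=.
have e1 : x + 1 + (y.+1)%:Z = l.+2%:Z by lia.
have e2 : x + 1 + y%:Z = l.+1%:Z by lia.
have -> : y%:Z + 1 = (y.+1)%:Z by lia.
rewrite -!mulr_sumr -/(TS _ _ _ _) -/(TS _ _ _ _).
case: (boolP (odd l)) => ol /=.
  rewrite [X in X + _ + _]big_pred0 // add0r.
  rewrite -(IH _ _ _ _ e2).
  case: y hxy e1 e2 => [|y] hxy e1 e2 /=.
    rewrite big_pred0 // mulr0 addr0 add0r /fo.
    by rewrite /= rmorphN1 opprK.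
  rewrite !subSS !subn0.
  have -> : (y.+1%:Z - 1 : int) = y%:Z by lia.
  have e3 : x + 1 + y%:Z = l%:Z by lia.
  rewrite -/(TS _ _ _ _) (IH _ _ _ _ e3) addrC /fo /=.
  by congr (_ + _).
rewrite [\sum_(i | false) _]big_pred0 // mulr0 addr0 -/(TS _ _ _ _).
by rewrite -(IH _ _ _ _ e2) -(IH _ _ _ _ e1).
Qed.

Lemma V_vanish k : forall l y d, (k + d < y)%N -> V k l y d = 0.
Proof.
elim: k => [|k IH] l y d h /=.
  by rewrite (_ : (y == d) = false) //; apply/negbTE/eqP; lia.
case: (odd l) => /=.
  case: y h => [|y] h; first by lia.
  by rewrite !IH ?mulr0 ?addr0 //; lia.
by rewrite !IH ?mulr0 ?addr0 //; lia.
Qed.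

Lemma V_vanish2 k l y d : ~~ odd l -> (k.+1 + d <= y)%N -> V k.+1 l y d = 0.
Proof. by move=> ol h /=; rewrite ol !V_vanish ?mulr0 ?addr0 //; lia. Qed.

Lemma endpt_fst (t : seq step) : forall x y, (endpt x y t).1 = x + (size t)%:Z.
Proof.
elim: t => [|h t IH] x y /=; first by rewrite addr0.
by case: h; rewrite IH; lia.
Qed.

End Comb.
Section Alg.
Variable R : rcfType.
Variable alpha : nat -> R[i].
Local Notation C := R[i].
Local Notation Ph := (Phi alpha).

Lemma size_pstar (f : {poly C}) : (size (pstar f) <= size f)%N.
Proof. exact: size_poly. Qed.

Lemma coef_pstar (f : {poly C}) i : (pstar f)`_i = if (i < size f)%N then (f`_((size f).-1 - i))^* else 0.
Proof. exact: coef_poly. Qed.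

Lemma Phi_size n : size (Ph n) = n.+1 /\ lead_coef (Ph n) = 1.
Proof.
elim: n => [|n [sz ld]] /=; first by rewrite size_poly1 lead_coef1.
have p0 : Ph n != 0 by rewrite -size_poly_eq0 sz.
have h : (size (- ((alpha n)^* *: pstar (Ph n)))%R < size (Ph n * 'X)%R)%N.
  rewrite size_opp size_mulX // sz ltnS.
  by apply: leq_trans (size_scale_leq _ _) _; rewrite -sz size_pstar.
rewrite mulrC size_addl // lead_coefDl // size_mulX // sz lead_coefMX ld; split => //.
Qed.

Lemma Phi_sz n : size (Ph n) = n.+1. Proof. by case: (Phi_size n). Qed.

Lemma pstar_rec n : pstar (Ph n.+1) = pstar (Ph n) - alpha n *: ('X * Ph n).
Proof.
apply/polyP => i.
have E : Ph n.+1 = 'X * Ph n - (alpha n)^* *: pstar (Ph n) by [].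
rewrite coef_pstar Phi_sz [_.+2.-1]/= E !coefB !coefZ !coefXM !coef_pstar Phi_sz [_.+1.-1]/=.
case: i => [|j] /=.
  by rewrite subn0 ltnn !mulr0 !subr0 subn0.
case: (ltnP j n.+1) => hj.
  rewrite ltnS hj subSS.
  case: (ltnP j n) => hjn.
    have h1 : (n - j == 0)%N = false by apply/negbTE; rewrite subn_eq0 -ltnNge.
    have h2 : (n - j < n.+1)%N by rewrite ltnS leq_subr.
    have h3 : (j.+1 < n.+1)%N by [].
    rewrite h1 h2 h3 (subKn (ltnW hjn)) -subnS.
    by rewrite rmorphB rmorphM /= !conjCK.
  have ejn : j = n by apply/eqP; rewrite eqn_leq hjn -ltnS hj.
  subst j; rewrite subnn /= subn0 ltnn sub0r.
  by rewrite rmorphN rmorphM /= !conjCK sub0r.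
have f1 : (j.+1 < n.+2)%N = false by lia.
have f2 : (j.+1 < n.+1)%N = false by lia.
by rewrite f1 f2 [(Ph n)`__]nth_default ?Phi_sz // mulr0 subr0.
Qed.

Lemma XPhi n : 'X * Ph n = Ph n.+1 + (alpha n)^* *: pstar (Ph n).
Proof. by rewrite /= subrK. Qed.

Lemma pstar_rec2 n : pstar (Ph n.+1) =
  (1 - `|alpha n| ^+ 2) *: pstar (Ph n) - alpha n *: Ph n.+1.
Proof.
rewrite pstar_rec XPhi scalerDr scalerA -normCK scalerBl scale1r.
by rewrite opprD addrA addrAC.
Qed.

Lemma pstar1 : pstar 1 = 1 :> {poly C}.
Proof.
apply/polyP => i; rewrite coef_pstar size_poly1 coef1.
by case: i => [|i]; rewrite ?coef1 //= ?conjC1.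
Qed.


Variable c : int -> C.

Definition ipB (A B : nat) (f g : {poly C}) : C :=
  \sum_(0 <= i < A) \sum_(0 <= j < B) f`_i * (g`_j)^* * c (i%:Z - j%:Z).

Lemma ipE A B (f g : {poly C}) : (size f <= A)%N -> (size g <= B)%N -> ip c f g = ipB A B f g.
Proof.
move=> hA hB.
have -> : ip c f g = \sum_(0 <= i < size f) \sum_(0 <= j < size g) f`_i * (g`_j)^* * c (i%:Z - j%:Z).
  by rewrite /ip big_mkord; apply: eq_bigr => i _; rewrite big_mkord.
rewrite /ipB [RHS](big_cat_nat (n := size f)) //=.
rewrite [X in _ = _ + X]big1_seq ?addr0; last first.
  move=> i /andP[_]; rewrite mem_index_iota => /andP[hi _].
  by apply: big1 => j _; rewrite nth_default // !mul0r.
apply: eq_bigr => i _.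
rewrite [RHS](big_cat_nat (n := size g)) //=.
rewrite [X in _ = _ + X]big1_seq ?addr0 //.
move=> j /andP[_]; rewrite mem_index_iota => /andP[hj _].
by rewrite [g`_j]nth_default // conjC0 mulr0 mul0r.
Qed.

Lemma ipDl (f1 f2 g : {poly C}) : ip c (f1 + f2) g = ip c f1 g + ip c f2 g.
Proof.
set A := maxn (size f1) (size f2).
have h1 : (size f1 <= A)%N by rewrite leq_maxl.
have h2 : (size f2 <= A)%N by rewrite leq_maxr.
have h3 : (size (f1 + f2)%R <= A)%N by apply: size_polyD.
rewrite !(@ipE A (size g)) // /ipB -big_split; apply: eq_bigr => i _.
by rewrite -big_split; apply: eq_bigr => j _; rewrite coefD !mulrDl.
Qed.

Lemma ipDr (f g1 g2 : {poly C}) : ip c f (g1 + g2) = ip c f g1 + ip c f g2.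
Proof.
set B := maxn (size g1) (size g2).
have h1 : (size g1 <= B)%N by rewrite leq_maxl.
have h2 : (size g2 <= B)%N by rewrite leq_maxr.
have h3 : (size (g1 + g2)%R <= B)%N by apply: size_polyD.
rewrite !(@ipE (size f) B) // /ipB -big_split; apply: eq_bigr => i _.
by rewrite -big_split; apply: eq_bigr => j _; rewrite coefD rmorphD /= mulrDr mulrDl.
Qed.

Lemma ipZl a (f g : {poly C}) : ip c (a *: f) g = a * ip c f g.
Proof.
rewrite !(@ipE (size f) (size g)) ?size_scale_leq // /ipB mulr_sumr; apply: eq_bigr => i _.
by rewrite mulr_sumr; apply: eq_bigr => j _; rewrite coefZ !mulrA.
Qed.

Lemma ipZr a (f g : {poly C}) : ip c f (a *: g) = a^* * ip c f g.
Proof.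
rewrite !(@ipE (size f) (size g)) ?size_scale_leq // /ipB mulr_sumr; apply: eq_bigr => i _.
rewrite mulr_sumr; apply: eq_bigr => j _; rewrite coefZ rmorphM /=.
by rewrite mulrCA !mulrA.
Qed.

Lemma ipNl (f g : {poly C}) : ip c (- f) g = - ip c f g.
Proof. by rewrite -scaleN1r ipZl mulN1r. Qed.
Lemma ipNr (f g : {poly C}) : ip c f (- g) = - ip c f g.
Proof. by rewrite -scaleN1r ipZr conjCN1 mulN1r. Qed.

Lemma ip0r (f : {poly C}) : ip c f 0 = 0.
Proof. by rewrite /ip size_poly0; apply: big1 => i _; rewrite big_ord0. Qed.
Lemma ip0l (g : {poly C}) : ip c 0 g = 0.
Proof. by rewrite /ip size_poly0 big_ord0. Qed.

Lemma ip_sumr (f : {poly C}) K (b : nat -> C) (g : nat -> {poly C}) :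
  ip c f (\sum_(t < K) b t *: g t) = \sum_(t < K) (b t)^* * ip c f (g t).
Proof.
elim: K => [|K IH]; first by rewrite !big_ord0 ip0r.
by rewrite !big_ord_recr /= ipDr IH ipZr.
Qed.

Lemma ip_suml (g : {poly C}) K (b : nat -> C) (f : nat -> {poly C}) :
  ip c (\sum_(t < K) b t *: f t) g = \sum_(t < K) b t * ip c (f t) g.
Proof.
elim: K => [|K IH]; first by rewrite !big_ord0 ip0l.
by rewrite !big_ord_recr /= ipDl IH ipZl.
Qed.

Lemma ipX (f g : {poly C}) : ip c ('X * f) ('X * g) = ip c f g.
Proof.
have hs (p : {poly C}) : (size ('X * p)%R <= (size p).+1)%N.
  by apply: leq_trans (size_polyMleq _ _) _; rewrite size_polyX.
rewrite [RHS](@ipE (size f) (size g)) // [LHS](@ipE (size f).+1 (size g).+1) // /ipB.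
rewrite big_nat_recl // coefXM /= big1 ?add0r; last by move=> j _; rewrite !mul0r.
apply: eq_bigr => i _; rewrite big_nat_recl // !coefXM /= conjC0 mulr0 mul0r add0r.
apply: eq_bigr => j _ /=.
rewrite coefXM /=; congr (_ * c _); rewrite !intS; ring.
Qed.


Hypothesis halpha : forall k, `|alpha k| < 1.
Hypothesis hL1 : c 0 = 1.
Hypothesis hLorth : forall m n : nat, m <> n -> ip c (Phi alpha m) (Phi alpha n) = 0.

Lemma span m (p : {poly C}) : (size p <= m)%N ->
  exists b : nat -> C, p = \sum_(t < m) b t *: Ph t.
Proof.
elim: m p => [|m IH] p hp.
  exists (fun _ => 0); rewrite big_ord0.
  by move: hp; rewrite leqn0 size_poly_eq0 => /eqP ->.
set q := p - p`_m *: Ph m.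
have hq : (size q <= m)%N.
  apply/leq_sizeP => i hi; rewrite /q coefB coefZ.
  case: (ltngtP i m) => him; first by rewrite ltnNge hi in him.
    have h1 : (size p <= i)%N by lia.
    have h2 : (size (Ph m) <= i)%N by rewrite Phi_sz.
    by rewrite (nth_default _ h1) (nth_default _ h2) mulr0 subr0.
  subst i; have := Phi_size m => -[sz ld].
  by move: ld; rewrite lead_coefE sz /= => ->; rewrite mulr1 subrr.
have [b hb] := IH q hq.
exists (fun t => if t == m then p`_m else b t).
rewrite big_ord_recr /= eqxx.
rewrite (eq_bigr (fun t : 'I_m => b t *: Ph t)); last by move=> t _; rewrite ltn_eqF.
by rewrite -hb /q subrK.
Qed.

Lemma orth_small m (p : {poly C}) : (size p <= m)%N ->
  ip c p (Ph m) = 0 /\ ip c (Ph m) p = 0.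
Proof.
move=> hp; have [b ->] := span hp.
rewrite ip_suml ip_sumr; split; apply: big1 => t _;
  rewrite hLorth ?mulr0 //; move: (ltn_ord t); lia.
Qed.

Lemma k_conj n : (1 - `|alpha n| ^+ 2)^* = 1 - `|alpha n| ^+ 2.
Proof. by rewrite normCK rmorphB rmorph1 rmorphM /= conjCK mulrC. Qed.

Lemma k_neq0 n : 1 - `|alpha n| ^+ 2 != 0.
Proof.
rewrite subr_eq0 eq_sym lt_eqF //.
by rewrite exprn_ilt1 ?normr_ge0.
Qed.

Lemma ip_expand1 (u P : {poly C}) b : ip c u P = 0 -> ip c P u = 0 ->
  ip c (u + b *: P) (u + b *: P) = ip c u u + b * b^* * ip c P P.
Proof.
move=> o1 o2; rewrite !(ipDl,ipDr,ipNl,ipNr,ipZl,ipZr) o1 o2; ring.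
Qed.

Lemma ip_expand2 (u P : {poly C}) k b : ip c u P = 0 -> ip c P u = 0 ->
  ip c (k *: P - b *: u) (k *: P - b *: u) = k * k^* * ip c P P + b * b^* * ip c u u.
Proof.
move=> o1 o2; rewrite !(ipDl,ipDr,ipNl,ipNr,ipZl,ipZr) o1 o2; ring.
Qed.

Lemma norms s : ip c (pstar (Ph s)) (pstar (Ph s)) = ip c (Ph s) (Ph s)
   /\ ip c (Ph s) (Ph s) != 0.
Proof.
elim: s => [|s [hQ hN]].
  rewrite /= pstar1; split => //.
  by rewrite /ip size_poly1 !big_ord1 coef1 /= conjC1 mulr1 mul1r subrr hL1 oner_neq0.
set a := alpha s; set P := pstar (Ph s).
have hP : (size P <= s.+1)%N by rewrite (leq_trans (size_pstar _)) ?Phi_sz.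
have [o1 o2] := orth_small hP.
have eN : ip c (Ph s) (Ph s) = ip c (Ph s.+1) (Ph s.+1) + a^* * a * ip c P P.
  have eX : ip c (Ph s) (Ph s) = ip c ('X * Ph s) ('X * Ph s) by rewrite ipX.
  by rewrite eX XPhi ip_expand1 // conjCK.
have eQ : ip c (pstar (Ph s.+1)) (pstar (Ph s.+1)) =
   (1 - `|a| ^+ 2) * (1 - `|a| ^+ 2)^* * ip c P P + a * a^* * ip c (Ph s.+1) (Ph s.+1).
  by rewrite pstar_rec2 -/a -/P ip_expand2.
rewrite hQ in eN.
have eN1 : ip c (Ph s.+1) (Ph s.+1) = (1 - `|a| ^+ 2) * ip c (Ph s) (Ph s).
  rewrite -[ip c (Ph s.+1) _](addrK (a^* * a * ip c (Ph s) (Ph s))) -eN normCK.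
  ring.
rewrite eQ k_conj hQ eN1; split.
  rewrite normCK; ring.
by rewrite mulf_neq0 // k_neq0.
Qed.


Definition Aex N l y : {poly C} :=
  if ~~ odd l then 'X^(N - l./2) * Ph y else 'X^(N - l./2 - 1) * pstar (Ph y).

Lemma expand_top N y : Aex N N.*2 y = \sum_(s < y.+1) (V alpha (y - s) N.*2 y s)^* *: Ph s.
Proof.
rewrite /Aex odd_double /= doubleK subnn expr0 mul1r big_ord_recr /= subnn /= eqxx.
rewrite conjC1 scale1r big1 ?add0r // => s _.
have hs := ltn_ord s.
rewrite (_ : (y - s = (y - s).-1.+1)%N); last by lia.
by rewrite V_vanish2 ?odd_double ?conjC0 ?scale0r //; lia.
Qed.


Lemma Aex_odd N l y : odd l -> Aex N l y = 'X^(N - l./2 - 1) * pstar (Ph y).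
Proof. by rewrite /Aex => ->. Qed.
Lemma Aex_even N l y : ~~ odd l -> Aex N l y = 'X^(N - l./2) * Ph y.
Proof. by rewrite /Aex => /negbTE ->. Qed.

Lemma expand N K : forall l y, (l <= N.*2)%N -> K = (N.*2 - l + y)%N ->
  Aex N l y = \sum_(s < K.+1) (V alpha (K - s) l y s)^* *: Ph s.
Proof.
elim: K => [|K IH] l y hl hK.
  have el : l = N.*2 by lia.
  have ey : y = 0%N by lia.
  by rewrite el ey expand_top.
case: (ltnP l N.*2) => hl2; last first.
  have el : l = N.*2 by lia.
  have ey : K.+1 = y by lia.
  by rewrite el ey expand_top.
rewrite big_ord_recr /= subnn /=.
rewrite (_ : (y == K.+1) = false); last by apply/negbTE/eqP; lia.
rewrite conjC0 scale0r addr0.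
under eq_bigr => s _ do rewrite (subSn (ltn_ord s : (s <= K)%N)) /=.
have hh := odd_double_half l.
case: (boolP (odd l)) => ol /=.
  rewrite ol add1n in hh.
  have h1 : (l.+1./2 = (l./2).+1)%N by rewrite -uphalfE uphalf_half ol.
  have o1 : odd l.+1 = false by rewrite /= ol.
  case: y hK => [|y] hK.
    have e2 := IH l.+1 0 ltac:(lia) ltac:(lia).
    have hA : Aex N l 0 = Aex N l.+1 0.
      rewrite /Aex o1 ol h1 /= pstar1; congr ('X^_ * _); lia.
    rewrite hA e2; apply: eq_bigr => s _.
    by rewrite add0r /fo mul1r.
  have e1 := IH l y ltac:(lia) ltac:(lia).
  have e2 := IH l.+1 y.+1 ltac:(lia) ltac:(lia).
  have hA : Aex N l y.+1 = (1 - `|alpha y| ^+ 2) *: Aex N l y - alpha y *: Aex N l.+1 y.+1.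
    rewrite [Aex N l y.+1]Aex_odd // [Aex N l y]Aex_odd // [Aex N l.+1 y.+1]Aex_even ?o1 // h1 pstar_rec2 mulrBr !scalerAr.
    congr (_ - 'X^_ * _); lia.
  rewrite hA e1 e2 !scaler_sumr -sumrN -big_split /=; apply: eq_bigr => s _.
  rewrite rmorphD !rmorphM /= k_conj /fo rmorphN /= conjCK !scalerA -scalerBl mulNr.
  by [].
have hl1 : l.+1 != N.*2 by apply/eqP => e; move: (odd_double N); rewrite -e /= ol.
rewrite (negbTE ol) add0n in hh.
have e1 := IH l.+2 y.+1 ltac:(lia) ltac:(lia).
have e2 := IH l.+1 y ltac:(lia) ltac:(lia).
have hA : Aex N l y = Aex N l.+2 y.+1 + (alpha y)^* *: Aex N l.+1 y.
  have o2 : odd l.+2 = odd l by rewrite /= negbK.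
  have o1 : odd l.+1 = ~~ odd l by [].
  have h2 : (l.+2./2 = (l./2).+1)%N by [].
  have h1 : (l.+1./2 = l./2)%N by rewrite -uphalfE uphalf_half (negbTE ol).
  have a1 : Aex N l y = 'X^(N - (l./2).+1) * ('X * Ph y).
    rewrite /Aex ol mulrA -exprSr; congr ('X^_ * _); lia.
  have a2 : Aex N l.+2 y.+1 = 'X^(N - (l./2).+1) * Ph y.+1.
    by rewrite /Aex o2 ol h2.
  have a3 : Aex N l.+1 y = 'X^(N - (l./2).+1) * pstar (Ph y).
    rewrite /Aex o1 ol h1 /=; congr ('X^_ * _); lia.
  by rewrite a1 a2 a3 XPhi mulrDr scalerAr.
rewrite hA e1 e2 scaler_sumr -big_split /=; apply: eq_bigr => s _.
by rewrite rmorphD rmorphM /= scalerDl scalerA.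
Qed.

End Alg.

Unset Implicit Arguments.
Theorem theorem3p7 (R : rcfType) (alpha : nat -> R[i])
  (halpha : forall k, `|alpha k| < 1)
  (c : int -> R[i])
  (hL1 : c 0 = 1)
  (hLorth : forall m n : nat, m <> n ->
     ip c (Phi alpha m) (Phi alpha n) = 0)
  (n r s : nat) :
  mu alpha c n r s
  = gMot_sum alpha (- (r%:Z)) r (2 * n%:Z - s%:Z) s.
Proof.
have [_ hN] := norms halpha hL1 hLorth s.
set K := (n.*2 + r)%N.
have E : Aex alpha n 0 r = \sum_(t < K.+1) (V alpha (K - t) 0 r t)^* *: Phi alpha t.
  by apply: expand; rewrite ?subn0.
have hA : Aex alpha n 0 r = 'X^n * Phi alpha r by rewrite Aex_even // subn0.
rewrite /mu -hA E (ip_sumr c (Phi alpha s) K.+1 (fun t => (V alpha (K - t) 0 r t)^*) (Phi alpha)).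
have hsum : \sum_(t < K.+1) ((V alpha (K - t) 0 r t)^*)^* * ip c (Phi alpha s) (Phi alpha t)
   = if (s < K.+1)%N then V alpha (K - s) 0 r s * ip c (Phi alpha s) (Phi alpha s) else 0.
  case: ifP => hs.
    rewrite (bigD1 (Ordinal hs)) //= big1 ?addr0 ?conjCK // => t ht.
    rewrite hLorth ?mulr0 // => e; move/eqP: ht; apply; apply/val_inj; by rewrite /= e.
  apply: big1 => t _; rewrite hLorth ?mulr0 //; move: (ltn_ord t); lia.
rewrite hsum /gMot_sum.
case: ifP => hs.
  rewrite mulfK //.
  have ea : absz ((2 * n%:Z - s%:Z - - r%:Z)%R) = (K - s)%N by lia.
  rewrite ea -(@TS_V _ alpha (K - s) (- r%:Z) r 0 s); last by rewrite addNr.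
  rewrite /TS; apply: eq_bigl => t.
  rewrite /gentle le0z_nat /=.
  case: (endpt (- r%:Z) r t) (endpt_fst t (- r%:Z) r) => [a b] /= ->.
  have ee : (- r%:Z + (K - s)%N%:Z == 2 * n%:Z - s%:Z) = true by apply/eqP; move: hs; rewrite /K; lia.
  by rewrite xpair_eqE size_tuple ee.
rewrite mul0r big_pred0 // => t.
apply/negbTE; rewrite negb_and; apply/orP; right.
case: (endpt (- r%:Z) r t) (endpt_fst t (- r%:Z) r) => [a b] /= ->.
rewrite xpair_eqE size_tuple negb_and; apply/orP; left; apply/eqP; lia.
Qed.
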